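(* Let $\alpha,l,L,k>0$ with $L>l$. For $n\in\{1,2,3,\dots\}$ let $x_n=-\frac{\pi}{2\alpha l}+n\frac{\pi}{\alpha l}$, and let $D=[0,+\infty)\setminus\{x_n: n\ge 1\}$. Define $f:D\to\mathbb{R}$ by $$f(x)=\arctan\!\left(\frac{\tan(\alpha l x)}{k\alpha}\right)+(L-l)x .$$ Then $(0,+\infty)\subseteq f(D)$, i.e. every positive real number is a value of $f$.
   Context: $\arctan$ denotes the principal branch with values in $(-\pi/2,\pi/2)$. *)

(* Defs.v *)
From Stdlib Require Import Reals.
Open Scope R_scope.

Definition xn (alpha l : R) (n : nat) : R :=
  - PI / (2 * alpha * l) + INR n * PI / (alpha * l).

Definition D_lem2 (alpha l : R) (x : R) : Prop :=
  0 <= x /\ forall n : nat, (1 <= n)%nat -> x <> xn alpha l n.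

Definition f_lem2 (alpha l L k : R) (x : R) : R :=
  atan (tan (alpha * l * x) / (k * alpha)) + (L - l) * x.

(* Main.v *)
Require Import Defs.
From Stdlib Require Import Reals.
Open Scope R_scope.
From Stdlib Require Import Lra Lia ZArith.
From Coquelicot Require Import Coquelicot.

Definition hh (K m : R) (n : nat) (t : R) := atan (tan t / K) + m * (INR n * PI + t).

Lemma hh_cont K m n y t : -PI/2 < t < PI/2 -> continuity_pt (fun t => hh K m n t - y) t.
Proof.
intros Ht. apply continuity_pt_filterlim. unfold hh.
assert (E: ex_derive (fun t => atan (tan t / K) + m * (INR n * PI + t) - y) t).
{ auto_derive. apply ex_derive_Reals_1. apply derivable_pt_tan. lra. }
exact (@ex_derive_continuous R_AbsRing R_NormedModule _ _ E).
Qed.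

Lemma core K m n y t0 t1 : -PI/2 < t0 -> t0 <= t1 -> t1 < PI/2 ->
  hh K m n t0 <= y -> y <= hh K m n t1 -> exists t, t0 <= t <= t1 /\ hh K m n t = y.
Proof.
intros H0 H01 H1 Ha Hb.
destruct (Rle_lt_or_eq_dec _ _ Ha) as [Ha'|Ha']; [|exists t0; split; [lra|auto]].
destruct (Rle_lt_or_eq_dec _ _ Hb) as [Hb'|Hb']; [|exists t1; split; [lra|auto]].
destruct (Rle_lt_or_eq_dec _ _ H01) as [H01'|H01']; [|subst; lra].
destruct (Ranalysis5.IVT_interv (fun t => hh K m n t - y) t0 t1) as [t [Ht Ht2]]; try lra.
- intros a Hab. apply hh_cont. lra.
- exists t. split; [lra|]. simpl in Ht2. lra.
Qed.

Lemma tan_le u v : -PI/2 < u -> u <= v -> v < PI/2 -> tan u <= tan v.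
Proof.
intros. destruct (Rle_lt_or_eq_dec _ _ H0) as [h|h]; [|subst; lra].
left. apply tan_increasing; lra.
Qed.

Lemma atan_le u v : u <= v -> atan u <= atan v.
Proof.
intros. destruct (Rle_lt_or_eq_dec _ _ H) as [h|h]; [|subst; lra].
left. apply atan_increasing; lra.
Qed.

Lemma tan_per n t : tan (INR n * PI + t) = tan t.
Proof.
induction n as [|n IH].
- simpl. f_equal. ring.
- rewrite S_INR. replace ((INR n + 1) * PI + t) with ((INR n * PI + t) + PI) by ring.
  rewrite <- IH. unfold tan. rewrite neg_sin, neg_cos. unfold Rdiv.
  rewrite Rinv_opp. ring.
Qed.
Lemma INR_ge1 n : n <> 0%nat -> 1 <= INR n.
Proof. intros H. destruct n as [|n']; [congruence|]. rewrite S_INR. assert (HH := pos_INR n'). lra. Qed.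

Lemma finish alpha l L k y n t : 0 < alpha -> 0 < l -> 0 < k ->
  -PI/2 < t < PI/2 -> 0 <= INR n * PI + t ->
  hh (k*alpha) ((L-l)/(alpha*l)) n t = y ->
  exists x, D_lem2 alpha l x /\ f_lem2 alpha l L k x = y.
Proof.
intros Ha Hl Hk Ht Hp H.
assert (HPI := PI_RGT_0).
assert (Hc : 0 < alpha * l) by (apply Rmult_lt_0_compat; lra).
exists ((INR n * PI + t) / (alpha * l)). split.
- split.
  + apply Rmult_le_pos; [lra|]. left. apply Rinv_0_lt_compat. lra.
  + intros j Hj E. unfold xn in E.
    assert (E2 : INR n * PI + t = - PI / 2 + INR j * PI).
    { replace (INR n * PI + t) with ((INR n * PI + t) / (alpha * l) * (alpha * l)) by (field; lra).
      rewrite E. field. lra. }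
    assert (H1 : 0 < (INR j - INR n) * PI) by lra.
    assert (H2 : (INR j - INR n) * PI < PI) by lra.
    assert (H3 : 0 < INR j - INR n) by nra.
    assert (H4 : INR j - INR n < 1) by nra.
    assert (H5 : (n < j)%nat) by (apply INR_lt; lra).
    assert (H6 : (j < S n)%nat) by (apply INR_lt; rewrite S_INR; lra).
    lia.
- unfold f_lem2.
  replace (alpha * l * ((INR n * PI + t) / (alpha * l))) with (INR n * PI + t) by (field; lra).
  rewrite tan_per. unfold hh in H. rewrite <- H.
  replace ((L - l) * ((INR n * PI + t) / (alpha * l))) with ((L - l) / (alpha * l) * (INR n * PI + t)) by (field; lra).
  reflexivity.
Qed.

Theorem lemma2 (alpha l L k : R) :
  0 < alpha -> 0 < l -> 0 < L -> 0 < k -> l < L ->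
  forall y : R, 0 < y -> exists x : R, D_lem2 alpha l x /\ f_lem2 alpha l L k x = y.
Proof.
intros Ha Hl HL Hk HlL y Hy.
assert (HPI := PI_RGT_0).
assert (Hc : 0 < alpha * l) by (apply Rmult_lt_0_compat; lra).
assert (Hm : 0 < (L - l) / (alpha * l)) by (apply Rdiv_lt_0_compat; lra).
assert (HK : 0 < k * alpha) by (apply Rmult_lt_0_compat; lra).
set (m := (L - l) / (alpha * l)) in *.
set (K := k * alpha) in *.
assert (HmP : 0 < m * PI) by (apply Rmult_lt_0_compat; lra).
set (z := y / (m * PI) + / 2).
destruct (archimed z) as [Hz1 Hz2].
assert (Hyz : y = (z - / 2) * (m * PI)) by (unfold z; field; lra).
assert (Hz0 : 0 < z).
{ unfold z. assert (0 < y / (m * PI)) by (apply Rdiv_lt_0_compat; lra). lra. }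
assert (Hup : (1 <= up z)%Z).
{ assert (0 < up z)%Z by (apply lt_IZR; lra). lia. }
set (n := Z.to_nat (up z - 1)).
assert (Hn : INR n = IZR (up z) - 1).
{ unfold n. rewrite INR_IZR_INZ, Z2Nat.id by lia. rewrite minus_IZR. simpl. ring. }
set (d := y - m * INR n * PI).
assert (Hd : d = (z - / 2 - INR n) * (m * PI)) by (unfold d; rewrite Hyz; ring).
assert (Hd1 : - (m * PI) / 2 <= d) by (rewrite Hd; nra).
assert (Hd2 : d < m * PI / 2) by (rewrite Hd; nra).
assert (HdmE : d / m * m = d) by (field; lra).
assert (Hdm1 : d / m < PI / 2) by nra.
assert (Hdm2 : - (PI / 2) <= d / m) by nra.
assert (Hq : 0 < PI / (4 * m)) by (apply Rdiv_lt_0_compat; lra).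
assert (HqE : m * (PI / (4 * m)) = PI / 4) by (field; lra).
assert (HatK : 0 < atan K) by (rewrite <- atan_0; apply atan_increasing; lra).
assert (HatKb := atan_bound K).
set (b := Rmax (atan K) (d / m - PI / (4 * m))).
assert (Hb1 : atan K <= b) by apply Rmax_l.
assert (Hb2 : d / m - PI / (4 * m) <= b) by apply Rmax_r.
assert (Hb3 : b < PI / 2) by (apply Rmax_lub_lt; lra).
assert (Hhb : y <= hh K m n b).
{ unfold hh.
  assert (T1 : K <= tan b).
  { rewrite <- (tan_atan K) at 1. apply tan_le; lra. }
  assert (T2 : 1 <= tan b / K).
  { replace 1 with (K / K) by (field; lra). unfold Rdiv.
    apply Rmult_le_compat_r; [left; apply Rinv_0_lt_compat; lra | lra]. }
  assert (T3 : PI / 4 <= atan (tan b / K)) by (rewrite <- atan_1; apply atan_le; lra).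
  assert (T4 : m * (d / m - PI / (4 * m)) <= m * b) by (apply Rmult_le_compat_l; lra).
  assert (T5 : m * (d / m - PI / (4 * m)) = d - PI / 4) by (field; lra).
  assert (T6 : m * (INR n * PI + b) = m * INR n * PI + m * b) by ring.
  unfold d in *. lra. }
clearbody n.
destruct (Nat.eq_dec n 0) as [Hn0|Hn0].
- assert (Hd0 : d = y) by (unfold d; rewrite Hn0; simpl; ring).
  assert (H00 : hh K m n 0 <= y).
  { unfold hh. rewrite Hn0, tan_0. simpl.
    replace (0 / K) with 0 by (field; lra). rewrite atan_0. lra. }
  destruct (core K m n y 0 b) as [t [Ht1 Ht2]]; [lra|lra|lra|exact H00|exact Hhb|].
  apply (finish alpha l L k y n t); [lra|lra|lra|lra| rewrite Hn0; simpl; lra | exact Ht2].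
- assert (Hn1 : 1 <= INR n) by (apply INR_ge1; exact Hn0).
  set (a := Rmin (- atan K) (d / m + PI / (4 * m))).
  assert (Ha1 : a <= - atan K) by apply Rmin_l.
  assert (Ha2 : a <= d / m + PI / (4 * m)) by apply Rmin_r.
  assert (Ha3 : - PI / 2 < a) by (apply Rmin_glb_lt; lra).
  assert (Hha : hh K m n a <= y).
  { unfold hh.
    assert (T1 : tan a <= - K).
    { rewrite <- (tan_atan K), <- tan_neg. apply tan_le; lra. }
    assert (T2 : tan a / K <= -1).
    { replace (-1) with (- K / K) by (field; lra). unfold Rdiv.
      apply Rmult_le_compat_r; [left; apply Rinv_0_lt_compat; lra | lra]. }
    assert (T3 : atan (tan a / K) <= - (PI / 4)) by (rewrite <- atan_1, <- atan_opp; apply atan_le; lra).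
    assert (T4 : m * a <= m * (d / m + PI / (4 * m))) by (apply Rmult_le_compat_l; lra).
    assert (T5 : m * (d / m + PI / (4 * m)) = d + PI / 4) by (field; lra).
    assert (T6 : m * (INR n * PI + a) = m * INR n * PI + m * a) by ring.
    unfold d in *. lra. }
  destruct (core K m n y a b) as [t [Ht1 Ht2]]; [lra|lra|lra|exact Hha|exact Hhb|].
  apply (finish alpha l L k y n t); [lra|lra|lra|lra| nra | exact Ht2].
Qed.
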